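(* Let $R$ be a commutative elementary divisor domain, let $S\in GL_n(R)$, and let $\Phi=\mathrm{diag}(\varphi_1,\dots,\varphi_n)$ be a nonsingular $n\times n$ $d$-matrix. The group $\mathbf G_\Phi$ contains a matrix $H$ such that $HS$ is a lower unitriangular matrix if and only if $$\Big(\frac{\varphi_{i+1}}{\varphi_i},\ \det S_{(i+1)}\Big)=1\quad\text{for } i=1,\dots,n-1,$$ where $S_{(i)}$ denotes the submatrix of $S$ formed by rows $i,\dots,n$ and columns $i,\dots,n$.
   Context: An elementary divisor ring is a ring over which every matrix is equivalent (i.e. $PAQ$ with $P,Q$ invertible) to a $d$-matrix, a diagonal matrix $\mathrm{diag}(\varphi_1,\dots)$ with $\varphi_i\mid\varphi_{i+1}$; such commutative domains are Bezout domains (every finitely generated ideal principal). For an $n\times n$ $d$-matrix $\Phi$, $\mathbf G_\Phi=\{H\in GL_n(R):\ \exists K\in GL_n(R),\ H\Phi=\Phi K\}$. A lower unitriangular matrix is a lower triangular matrix with all diagonal entries equal to $1$. *)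

(* Defs.v *)
From HB Require Import structures.
From mathcomp Require Import all_boot all_order all_algebra.
Set Implicit Arguments. Unset Strict Implicit. Unset Printing Implicit Defensive.
Import GRing.Theory.
Local Open Scope ring_scope.

Definition dvdR (R : comNzRingType) (a b : R) : Prop := exists c : R, b = c * a.

Definition coprimeR (R : comNzRingType) (a b : R) : Prop :=
  forall d : R, dvdR d a -> dvdR d b -> dvdR d 1.

Definition is_dmx (R : comNzRingType) (m n : nat) (D : 'M[R]_(m, n)) : Prop :=
  (forall (i : 'I_m) (j : 'I_n), (i : nat) <> (j : nat) -> D i j = 0) /\
  (forall (i i' : 'I_m) (j j' : 'I_n),
      (i : nat) = j -> (i' : nat) = j' -> (i' : nat) = i.+1 ->
      dvdR (D i j) (D i' j')).

Definition elementary_divisor_ring (R : comUnitRingType) : Prop :=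
  forall (m n : nat) (A : 'M[R]_(m, n)),
    exists (P : 'M[R]_m) (Q : 'M[R]_n),
      P \in unitmx /\ Q \in unitmx /\ is_dmx (P *m A *m Q).

Definition G_Phi (R : comUnitRingType) (n : nat) (Phi : 'M[R]_n) (H : 'M[R]_n)
  : Prop :=
  H \in unitmx /\ exists K : 'M[R]_n, K \in unitmx /\ H *m Phi = Phi *m K.

Definition lower_unitriangular (R : nzRingType) (n : nat) (M : 'M[R]_n) : Prop :=
  (forall i j : 'I_n, (i < j)%N -> M i j = 0) /\ (forall i : 'I_n, M i i = 1).

(* Trailing principal submatrix: rows and columns k, ..., n-1 (0-based). *)
Definition trail_idx (n k : nat) (a : 'I_(n - k)) : 'I_n :=
  insubd (widen_ord (leq_subr k n) a) (a + k)%N.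

Definition trail (R : Type) (n k : nat) (S : 'M[R]_n) : 'M[R]_(n - k) :=
  \matrix_(a, b) S (trail_idx a) (trail_idx b).

(* Main.v *)
Require Import Defs.
From HB Require Import structures.
From mathcomp Require Import all_boot all_order all_fingroup all_algebra zify ring.
Import GRing.Theory.
Set Implicit Arguments. Unset Strict Implicit. Unset Printing Implicit Defensive.
Local Open Scope ring_scope.

Definition idealP (R : comNzRingType) (Id : R -> Prop) :=
  Id 0 /\ (forall x y, Id x -> Id y -> Id (x + y)) /\ (forall r x, Id x -> Id (r * x)).

Lemma ideal_sum (R : comNzRingType) (Id : R -> Prop) (I : finType) (F : I -> R) :
  idealP Id -> (forall i, Id (F i)) -> Id (\sum_i F i).
Proof.
move=> [h0 [hD hM]] hF; apply: (big_ind Id) => //.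
Qed.

Lemma ideal_mul (R : comNzRingType) (Id : R -> Prop) m n p (A : 'M[R]_(m,n)) (B : 'M[R]_(n,p)) :
  idealP Id -> (forall i j, Id (B i j)) -> forall i j, Id ((A *m B) i j).
Proof.
move=> hI hB i j; rewrite mxE; apply: ideal_sum => // k.
by case: hI => _ [_ hM]; apply: hM.
Qed.

Lemma ideal_mulr (R : comNzRingType) (Id : R -> Prop) m n p (A : 'M[R]_(m,n)) (B : 'M[R]_(n,p)) :
  idealP Id -> (forall i j, Id (A i j)) -> forall i j, Id ((A *m B) i j).
Proof.
move=> hI hB i j; rewrite mxE; apply: ideal_sum => // k.
by case: hI => _ [_ hM]; rewrite mulrC; apply: hM.
Qed.

Lemma dvd_ideal (R : comNzRingType) (g : R) : idealP (dvdR g).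
Proof.
split; first by exists 0; rewrite mul0r.
split; first by move=> x y [a ->] [b ->]; exists (a + b); rewrite mulrDl.
by move=> r x [a ->]; exists (r * a); rewrite mulrA.
Qed.

Lemma comb_ideal (R : comNzRingType) (a b : R) :
  idealP (fun x => exists u v, x = u * a + v * b).
Proof.
split; first by exists 0, 0; rewrite !mul0r addr0.
split; first by move=> x y [u [v ->]] [u' [v' ->]]; exists (u + u'), (v + v'); ring.
by move=> r x [u [v ->]]; exists (r * u), (r * v); ring.
Qed.

Lemma bezout (R : idomainType) (HR : elementary_divisor_ring R) (a b : R) :
  coprimeR a b -> exists u v, u * a + v * b = 1.
Proof.
move=> hc.
pose A : 'M[R]_(1,2) := \matrix_(i, j) if j == 0 then a else b.
have [P [Q [uP [uQ [hz _]]]]] := HR 1%N 2%N A.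
set D := P *m A *m Q in hz.
have hD1 : D 0 1 = 0 by apply: hz.
have hdv : forall i j, dvdR (D 0 0) (D i j).
  move=> i j; rewrite (ord1 i); case: j => [[|[|//]] hj].
    have -> : Ordinal hj = 0 by apply: val_inj. by exists 1; rewrite mul1r.
  have -> : Ordinal hj = 1 by apply: val_inj. by rewrite hD1; exists 0; rewrite mul0r.
have hA : A = invmx P *m D *m invmx Q.
  by rewrite /D !mulmxA mulVmx // mul1mx -mulmxA mulmxV // mulmx1.
have h1 : dvdR (D 0 0) a.
  have := ideal_mulr (invmx Q) (dvd_ideal (D 0 0)) (ideal_mul (invmx P) (dvd_ideal _) hdv) 0 0.
  by rewrite -hA [A _ _]mxE.
have h2 : dvdR (D 0 0) b.
  have := ideal_mulr (invmx Q) (dvd_ideal (D 0 0)) (ideal_mul (invmx P) (dvd_ideal _) hdv) 0 1.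
  by rewrite -hA [A _ _]mxE.
have [e he] := hc _ h1 h2.
have hAi : forall i j, exists u v, A i j = u * a + v * b.
  move=> i j; rewrite mxE; case: (j == 0).
    by exists 1, 0; rewrite mul1r mul0r addr0.
  by exists 0, 1; rewrite mul1r mul0r add0r.
have [u [v huv]] := ideal_mulr Q (comb_ideal a b) (ideal_mul P (comb_ideal a b) hAi) 0 0.
exists (e * u), (e * v); rewrite he -/D huv; ring.
Qed.

Definition eqmod (R : comNzRingType) (q a b : R) := exists c, a = b + q * c.

Lemma eqmod_det (R : comNzRingType) n (q : R) (A B : 'M[R]_n) :
  (forall i j, eqmod q (A i j) (B i j)) -> eqmod q (\det A) (\det B).
Proof.
move=> hAB; rewrite /determinant.
apply: (big_ind2 (eqmod q)).
- by exists 0; rewrite mulr0 addr0.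
- by move=> x1 x2 y1 y2 [c ->] [c' ->]; exists (c + c'); ring.
move=> s _ /=.
have : eqmod q (\prod_i A i ((s : 'S_n) i)) (\prod_i B i ((s : 'S_n) i)).
  apply: (big_ind2 (eqmod q)).
  - by exists 0; rewrite mulr0 addr0.
  - by move=> x1 x2 y1 y2 [c ->] [c' ->]; exists (c * y2 + x2 * c' + q * c * c'); ring.
  by move=> i _; apply: hAB.
by move=> [c ->]; exists ((-1) ^+ s * c); rewrite mulrDr mulrCA.
Qed.

Lemma trail_idxE n k (a : 'I_(n - k)) : val (trail_idx a) = (a + k)%N.
Proof.
rewrite /trail_idx val_insubd; have := ltn_ord a.
case: ifP => //= /negbT; lia.
Qed.

Lemma det_cast (R : comNzRingType) n m (e : n = m) (A : 'M[R]_n) :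
  \det (castmx (e, e) A) = \det A.
Proof. by case: m / e; rewrite castmx_id. Qed.

Lemma castmx_mul (R : comNzRingType) n m (e : n = m) (A B : 'M[R]_n) :
  castmx (e, e) (A *m B) = castmx (e, e) A *m castmx (e, e) B.
Proof. by case: m / e; rewrite !castmx_id. Qed.

Lemma det_trail0 (R : comNzRingType) n (A : 'M[R]_n) : \det (trail 0 A) = \det A.
Proof.
have e : n = (n - 0)%N by rewrite subn0.
rewrite -(det_cast e); congr (\det _); apply/matrixP => a b.
rewrite !mxE castmxE; congr (A _ _); apply: val_inj; by rewrite /= trail_idxE addn0.
Qed.

Lemma trail_S (R : comNzRingType) n k (A : 'M[R]_(1 + n)) :
  trail k.+1 A = trail k (drsubmx A).
Proof.
apply/matrixP => a b; rewrite !mxE; congr (A _ _); apply: val_inj;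
  by rewrite /= !trail_idxE addnS.
Qed.

Lemma trail_cast (R : comNzRingType) n k (e : n = (k + (n - k))%N) (A : 'M[R]_n) :
  trail k A = drsubmx (castmx (e, e) A).
Proof.
apply/matrixP => a b; rewrite !mxE castmxE; congr (A _ _); apply: val_inj;
  by rewrite /= !trail_idxE addnC.
Qed.

Lemma nec_block (R : comNzRingType) n k (G L : 'M[R]_n) (q : R) : (k <= n)%N ->
  (forall i j : 'I_n, (j < k)%N -> (k <= i)%N -> dvdR q (G i j)) ->
  lower_unitriangular L ->
  exists a b, \det G = a * \det (trail k (G *m L)) + q * b.
Proof.
move=> hk hG [hL1 hL2].
have e : n = (k + (n - k))%N by rewrite subnKC.
rewrite (trail_cast e) castmx_mul.
set B := castmx (e,e) G; set C := castmx (e,e) L.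
have hC2 : ursubmx C = 0.
  apply/matrixP => i j; rewrite !mxE castmxE; apply: hL1 => /=.
  have := ltn_ord i; lia.
have hC4 : \det (drsubmx C) = 1.
  rewrite det_trig; last first.
    apply/is_trig_mxP => i j hij; rewrite !mxE /C castmxE; apply: hL1 => /=; lia.
  by apply: big1 => i _; rewrite !mxE /C castmxE hL2.
rewrite -[B]submxK -[C]submxK hC2 mulmx_block block_mxKdr mulmx0 add0r det_mulmx hC4 mulr1.
have := @eqmod_det _ _ q B (block_mx (ulsubmx B) (ursubmx B) 0 (drsubmx B)).
case.
  move=> i j; rewrite -{1}[B]submxK -[i]splitK -[j]splitK.
  case: (split i) => i'; case: (split j) => j' /=;
    rewrite ?block_mxEul ?block_mxEur ?block_mxEdl ?block_mxEdr;
    try by exists 0; rewrite mulr0 addr0.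
  rewrite !mxE /B castmxE.
  have [c hc] : dvdR q (G (cast_ord (esym e) (rshift k i')) (cast_ord (esym e) (lshift (n - k) j'))).
    apply: hG => /=; [exact: ltn_ord | lia].
  by exists c; rewrite hc add0r mulrC.
move=> c; rewrite det_ublock => hc.
exists (\det (ulsubmx B)), c.
by rewrite -(det_cast e) -/B.
Qed.

Lemma lemA (R : idomainType) (HR : elementary_divisor_ring R) m (N : 'M[R]_m) (q : nat -> R) :
  (forall k, (k < m)%N -> coprimeR (q k) (\det (trail k N))) ->
  forall t : 'cV[R]_m, exists x : 'cV[R]_m, forall i : 'I_m,
    dvdR (\prod_(0 <= l < i.+1) q l) ((N *m x - t) i 0).
Proof.
elim: m N q => [|m IH] N q hc t.
  by exists 0 => -[].
have hc0 := hc 0%N isT; rewrite det_trail0 in hc0.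
have [u [v huv]] := bezout HR hc0.
pose w0 := - (u *: t).
pose x0 := \adj N *m (v *: t).
have hx0 : N *m x0 - t = q 0%N *: w0.
  rewrite /x0 mulmxA mul_mx_adj mul_scalar_mx scalerA.
  have -> : \det N * v = 1 - u * q 0%N by rewrite -huv; ring.
  by rewrite scalerBl scale1r /w0 scalerN scalerA addrAC subrr add0r mulrC.
pose N' := drsubmx (N : 'M_(1 + m)).
have hc' : forall k, (k < m)%N -> coprimeR (q k.+1) (\det (trail k N')).
  by move=> k hk; rewrite /N' -trail_S; apply: hc.
have [y hy] := IH N' (fun l => q l.+1) hc' (- dsubmx (w0 : 'M_(1 + m, 1))).
exists (x0 + q 0%N *: col_mx (0 : 'cV_1) y) => i.
have hN : N *m (x0 + q 0%N *: col_mx (0 : 'cV_1) y) - t =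
    q 0%N *: (w0 + col_mx (ursubmx (N : 'M_(1 + m)) *m y) (N' *m y)).
  rewrite mulmxDr addrAC hx0 -scalemxAr -scalerDr; congr (_ *: (_ + _)).
  rewrite -{1}(submxK (N : 'M_(1 + m))); apply: etrans; first exact: (@mul_block_col _ 1 m 1 m 1 (ulsubmx (N : 'M_(1 + m))) (ursubmx (N : 'M_(1 + m))) (dlsubmx (N : 'M_(1 + m))) (drsubmx (N : 'M_(1 + m))) 0 y). by rewrite !mulmx0 !add0r.
rewrite hN mxE.
have -> : i = unsplit (split (i : 'I_(1 + m))) by rewrite splitK. case: (split _) => i' /=.
  rewrite (ord1 i') big_nat1.
  by eexists; rewrite mulrC.
rewrite big_nat_recl //.
have [c hc1] := hy i'.
exists c; rewrite [X in q 0%N * X = _]mxE (@col_mxEd _ 1 m 1).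
rewrite !mxE in hc1; rewrite /w0 !mxE. rewrite opprK in hc1; by rewrite addrC hc1 mulrCA.

Qed.

Lemma lu_block (R : comNzRingType) n (y : 'cV[R]_n) (L : 'M[R]_n) :
  lower_unitriangular L ->
  lower_unitriangular (block_mx (1%:M : 'M_1) 0 y L : 'M_(1 + n)).
Proof.
move=> [h1 h2]; split.
  move=> i j.
  rewrite -[i]splitK -[j]splitK.
  case: (split i) => i'; case: (split j) => j' /=;
    rewrite ?block_mxEul ?block_mxEur ?block_mxEdl ?block_mxEdr ?mxE //.
  all: try (by rewrite !ord1); try (by move=> h; apply: h1).
move=> i; rewrite -[i]splitK; case: (split i) => i' /=.
  by rewrite block_mxEul (ord1 i') mxE.
by rewrite block_mxEdr h2.
Qed.

Lemma suffL (R : idomainType) (HR : elementary_divisor_ring R) n (S : 'M[R]_n) (q : nat -> R) :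
  (forall k, (k.+1 < n)%N -> coprimeR (q k) (\det (trail k.+1 S))) ->
  exists L Li : 'M[R]_n, lower_unitriangular L /\ lower_unitriangular Li /\
    L *m Li = 1%:M /\
    forall i j : 'I_n, (j < i)%N -> dvdR (\prod_(j <= l < i) q l) ((S *m L) i j).
Proof.
elim: n S q => [|n IH] S q hc.
  exists 1%:M, 1%:M; split; first by split; case.
  split; first by split; case.
  by split; [rewrite mul1mx | case].
pose S0 := (S : 'M_(1 + n)).
pose S' := drsubmx S0.
have hc' : forall k, (k.+1 < n)%N -> coprimeR (q k.+1) (\det (trail k.+1 S')).
  by move=> k hk; rewrite /S' -trail_S; apply: hc.
have [L' [Li' [hL' [hLi' [hLL' hP']]]]] := IH S' (fun l => q l.+1) hc'.
have hcA : forall k, (k < n)%N -> coprimeR (q k) (\det (trail k S')).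
  by move=> k hk; rewrite /S' -trail_S; apply: hc.
have [y hy] := lemA HR hcA (- dlsubmx S0).
exists (block_mx (1%:M : 'M_1) 0 y L' : 'M_(1 + n)).
exists (block_mx (1%:M : 'M_1) 0 (- (Li' *m y)) Li' : 'M_(1 + n)).
split; first exact: lu_block.
split; first exact: lu_block.
split.
  apply: etrans; first exact: (mulmx_block (1%:M : 'M_1) 0 y L' (1%:M : 'M_1) 0 (- (Li' *m y)) Li').
  rewrite !mulmx0 !mul0mx !mulmx1 !addr0 !add0r mulmxN mulmxA hLL' mul1mx subrr.
  by rewrite -scalar_mx_block.
have eS : S = block_mx (ulsubmx S0) (ursubmx S0) (dlsubmx S0) S' by rewrite submxK.
have -> : S *m (block_mx (1%:M : 'M_1) 0 y L' : 'M_(1 + n)) =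
   block_mx (ulsubmx S0 + ursubmx S0 *m y) (ursubmx S0 *m L')
            (S' *m y - - dlsubmx S0) (S' *m L').
  rewrite [in LHS]eS.
  apply: etrans; first exact: (mulmx_block (ulsubmx S0) (ursubmx S0) (dlsubmx S0) S' (1%:M : 'M_1) 0 y L').
  by rewrite !mulmx0 !add0r !mulmx1 opprK [dlsubmx S0 + _]addrC [ulsubmx S0 + _]addrC.
move=> i j.
have -> : i = unsplit (split (i : 'I_(1 + n))) by rewrite splitK.
have -> : j = unsplit (split (j : 'I_(1 + n))) by rewrite splitK.
case: (split _) => j'; case: (split _) => i' /=.
- by rewrite (ord1 i') (ord1 j').
- rewrite (@block_mxEdl _ 1 n 1 n) (ord1 j') => _; exact: hy.
- by rewrite (ord1 i').
move=> hij; rewrite (@block_mxEdr _ 1 n 1 n) big_add1 /=; exact: hP'.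
Qed.

Lemma dvdR_trans (R : comNzRingType) (a b c : R) : dvdR a b -> dvdR b c -> dvdR a c.
Proof. by move=> [x ->] [y ->]; exists (y * x); rewrite mulrA. Qed.

Lemma chain_prod (R : comNzRingType) n (f : 'I_n -> R) (q : nat -> R) :
  (forall a b : 'I_n, (b : nat) = (a : nat).+1 -> f b = q a * f a) ->
  forall a b : 'I_n, (a <= b)%N -> f b = (\prod_(a <= l < b) q l) * f a.
Proof.
move=> h a.
suff H : forall d (b : 'I_n), (b : nat) = (a + d)%N -> f b = (\prod_(a <= l < b) q l) * f a.
  by move=> b hab; apply: (H (b - a)%N b); rewrite subnKC.
elim=> [|d IH] b hb.
  have -> : b = a by apply: val_inj => /=; rewrite hb addn0.
  by rewrite big_geq // mul1r.
have hb' : (a + d < n)%N by have := ltn_ord b; lia.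
have := IH (Ordinal hb') erefl => hIH.
rewrite (h (Ordinal hb') b) /=; last by rewrite hb addnS.
rewrite hIH /= hb addnS big_nat_recr /=; last by lia.
by rewrite mulrA [q _ * _]mulrC.
Qed.

Unset Implicit Arguments.

Theorem theorem2p8 (R : idomainType) (HR : elementary_divisor_ring R)
  (n : nat) (S : 'M[R]_n) (hS : S \in unitmx)
  (phi : 'rV[R]_n) (hd : is_dmx (diag_mx phi))
  (hns : \det (diag_mx phi) != 0) :
  (exists H : 'M[R]_n, G_Phi (diag_mx phi) H /\ lower_unitriangular (H *m S))
  <->
  (forall (i j : 'I_n), (j : nat) = i.+1 ->
     forall c : R, phi 0 j = c * phi 0 i ->
       coprimeR c (\det (trail j S))).
Proof.
have hdiag : forall i : 'I_n, diag_mx phi i i = phi 0 i.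
  by move=> i; rewrite mxE eqxx mulr1n.
have hcons : forall a b : 'I_n, (b : nat) = (a : nat).+1 -> dvdR (phi 0 a) (phi 0 b).
  by move=> a b hab; have := hd.2 a b a b erefl erefl hab; rewrite !hdiag.
have hnz : forall i : 'I_n, phi 0 i != 0.
  move=> i; apply/negP => /eqP h0; move: hns; rewrite det_diag (bigD1 i) //= h0 mul0r.
  by rewrite eqxx.
have exq : forall k : nat, exists c : R, [forall a : 'I_n, forall b : 'I_n,
    ((a == k :> nat) && (b == k.+1 :> nat)) ==> (phi 0 b == c * phi 0 a)].
  move=> k; case: (ltnP k.+1 n) => hk.
    have [c hc] := hcons (Ordinal (ltnW hk)) (Ordinal hk) erefl.
    exists c; apply/forallP => a'; apply/forallP => b'; apply/implyP => /andP [/eqP ha /eqP hb].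
    have -> : a' = Ordinal (ltnW hk) by apply: val_inj.
    have -> : b' = Ordinal hk by apply: val_inj.
    by rewrite hc.
  exists 0; apply/forallP => a'; apply/forallP => b'; apply/implyP => /andP [_ /eqP hb].
  by have := ltn_ord b'; lia.
pose q k := xchoose (exq k).
have qspec : forall a b : 'I_n, (b : nat) = (a : nat).+1 -> phi 0 b = q a * phi 0 a.
  move=> a b hab; have := xchooseP (exq a) => /forallP /(_ a) /forallP /(_ b).
  by rewrite eqxx hab eqxx /= => /eqP.
have hprod := @chain_prod _ n (fun i => phi 0 i) q qspec.
split.
- move=> [H [[hH [K [hK hHK]]] hL]] i j hj c hc.
  pose G := invmx H.
  have hGK : G *m diag_mx phi = diag_mx phi *m invmx K.
    by rewrite -{1}[diag_mx phi](mulmxK hK) -hHK !mulmxA /G mulVmx // mul1mx.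
  have hpat : forall r s : 'I_n, (s < j)%N -> (j <= r)%N -> dvdR c (G r s).
    move=> r s hs hr.
    have := congr1 (fun M : 'M[R]_n => M r s) hGK; rewrite mul_mx_diag mul_diag_mx !mxE /=.
    rewrite (hprod j r hr) hc (hprod s i); last by lia.
    move=> e; exists (\prod_(j <= l < r) q l * \prod_(s <= l < i) q l * invmx K r s).
    apply: (mulIf (hnz s)); rewrite e; ring.
  have [a [b hab]] := nec_block (ltnW (ltn_ord j)) hpat hL.
  rewrite /G mulKmx // in hab.
  move=> d [e1 he1] [e2 he2].
  have hdet : \det G * \det H = 1 by rewrite -det_mulmx /G mulVmx // det1.
  exists ((a * e2 + e1 * b) * \det H).
  by rewrite -hdet /G hab he1 he2; ring.
- move=> hcond.
  have hc : forall k, (k.+1 < n)%N -> coprimeR (q k) (\det (trail k.+1 S)).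
    move=> k hk.
    have := hcond (Ordinal (ltnW hk)) (Ordinal hk) erefl (q k) (qspec (Ordinal (ltnW hk)) (Ordinal hk) erefl); exact.
  have [L [Li [hL [hLi [hLLi hP]]]]] := suffL HR hc.
  pose M := S *m L.
  have hdetL : \det L = 1.
    rewrite det_trig; last by apply/is_trig_mxP => r s; apply: hL.1.
    by apply: big1 => r _; apply: hL.2.
  have hM : M \in unitmx by rewrite unitmxE det_mulmx hdetL mulr1 -unitmxE.
  have eS : S = M *m Li by rewrite /M -mulmxA hLLi mulmx1.
  exists (invmx M); split; last by rewrite {1}eS mulKmx.
  split; first by rewrite unitmx_inv.
  have exK : forall r s : 'I_n, exists c, M r s * phi 0 s == phi 0 r * c.
    move=> r s; case: (ltnP s r) => hrs.
      have [c hcP] := hP r s hrs.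
      exists c; rewrite hcP (hprod s r (ltnW hrs)); apply/eqP; ring.
    exists (M r s * \prod_(r <= l < s) q l); rewrite (hprod r s hrs); apply/eqP; ring.
  pose K' := \matrix_(r, s) xchoose (exK r s).
  have hMK : M *m diag_mx phi = diag_mx phi *m K'.
    apply/matrixP => r s; rewrite mul_mx_diag mul_diag_mx [in LHS]mxE [in RHS]mxE [K' r s]mxE.
    exact: (eqP (xchooseP (exK r s))).
  have hdK : \det M = \det K'.
    apply: (mulfI hns); rewrite -!det_mulmx -hMK det_mulmx mulrC.
    by rewrite [RHS]det_mulmx.
  have hK' : K' \in unitmx by rewrite unitmxE -hdK -unitmxE.
  exists (invmx K'); split; first by rewrite unitmx_inv.
  by rewrite -[LHS](mulmxK hK') -(mulmxA (invmx M)) -hMK mulmxA mulVmx // mul1mx.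
Qed.
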